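(* Let $(\mathcal M,g_{ab})$ be a 4-dimensional Lorentzian manifold with a Killing vector $\vec\zeta$, and let $x$ be a point at which $\vec\zeta$ is timelike. Then $\mathcal S_{abc}\bar{\mathcal S}^{abc}|_x\ge0$, with equality if and only if $\mathcal S_{abc}|_x=0$.
   Context: $(\mathcal M,g_{ab})$ is a 4-dimensional Lorentzian manifold (signature $(-,+,+,+)$) with volume form $\eta_{abcd}$ and Weyl tensor $C_{abcd}$; square brackets denote antisymmetrization. For a Killing vector $\vec\zeta$: $\lambda=\zeta_a\zeta^a$, $F_{ab}=\nabla_a\zeta_b$, $F^*_{ab}=\tfrac12\eta_{abcd}F^{cd}$, $\mathcal F_{ab}=F_{ab}+iF^*_{ab}$; $C^*_{abcd}=\tfrac12\eta_{cdpq}C_{ab}{}^{pq}$, $\mathcal C_{abcd}=C_{abcd}+iC^*_{abcd}$; Ernst one-form $\sigma_a=2\mathcal F_{ab}\zeta^b$; $\gamma_{ab}=\zeta_a\zeta_b-\lambda g_{ab}$. The space-time Simon tensor is $\mathcal S_{abc}=\gamma_{a[b}\mathcal C_{c]mrd}\zeta^m\mathcal F^{rd}+4\zeta^m\zeta^r\mathcal C_{mar[c}\sigma_{b]}$. *)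

(* Defs.v *)
(* Pointwise (tangent space at x) algebraic formalization. *)
From HB Require Import structures.
From mathcomp Require Import all_boot all_order all_algebra.
Set Implicit Arguments. Unset Strict Implicit. Unset Printing Implicit Defensive.
Import Order.TTheory GRing.Theory Num.Theory.
Local Open Scope ring_scope.

Section Simon.
Variable C : numClosedFieldType.

(* components w.r.t. a basis of T_x M, indices in 'I_4 *)
Definition sum4 (f : 'I_4 -> C) : C := \sum_(i < 4) f i.

Definition real_vec (v : 'I_4 -> C) := forall a, v a \is Num.real.
Definition real_mx (g : 'M[C]_4) := forall a b, g a b \is Num.real.

Definition minkowski_diag : 'M[C]_4 :=
  diag_mx (\row_(i < 4) (if i == ord0 then -1 else 1)).
Definition lorentzian (g : 'M[C]_4) : Prop :=
  real_mx g /\ g^T = g /\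
  exists P : 'M[C]_4, real_mx P /\ P \in unitmx /\ P^T *m g *m P = minkowski_diag.

Definition ginv (g : 'M[C]_4) : 'M[C]_4 := invmx g.

(* Levi-Civita symbol [abcd] (epsilon_{0123} = 1) *)
Definition levi (a b c d : 'I_4) : C :=
  \det (\matrix_(i < 4, j < 4) ((nth a [:: a; b; c; d] i == j)%:R : C)).

Definition eta (g : 'M[C]_4) (a b c d : 'I_4) : C :=
  sqrtC `|\det g| * levi a b c d.

Variables (g : 'M[C]_4) (zeta : 'I_4 -> C) (F : 'I_4 -> 'I_4 -> C)
          (W : 'I_4 -> 'I_4 -> 'I_4 -> 'I_4 -> C).
(* zeta = zeta_a (index down), F = F_{ab} = nabla_a zeta_b at x,
   W = C_{abcd} Weyl tensor at x (all indices down) *)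

Definition zetaU (a : 'I_4) : C := sum4 (fun b => ginv g a b * zeta b).
Definition lam : C := sum4 (fun a => zeta a * zetaU a).

Definition raise2 (T : 'I_4 -> 'I_4 -> C) (c d : 'I_4) : C :=
  sum4 (fun p => sum4 (fun q => ginv g c p * ginv g d q * T p q)).

Definition Fstar (a b : 'I_4) : C :=
  2^-1 * sum4 (fun c => sum4 (fun d => eta g a b c d * raise2 F c d)).
Definition FF (a b : 'I_4) : C := F a b + 'i * Fstar a b.

Definition Wstar (a b c d : 'I_4) : C :=
  2^-1 * sum4 (fun p => sum4 (fun q =>
     eta g c d p q * raise2 (W a b) p q)).
Definition CC (a b c d : 'I_4) : C := W a b c d + 'i * Wstar a b c d.

Definition sigma (a : 'I_4) : C := 2 * sum4 (fun b => FF a b * zetaU b).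

Definition gam (a b : 'I_4) : C := zeta a * zeta b - lam * g a b.

Definition Tc (c : 'I_4) : C :=
  sum4 (fun m => sum4 (fun r => sum4 (fun d =>
    CC c m r d * zetaU m * raise2 FF r d))).
Definition Uac (a c : 'I_4) : C :=
  sum4 (fun m => sum4 (fun r => zetaU m * zetaU r * CC m a r c)).

(* Simon tensor S_{abc}; [bc] = 1/2 (bc - cb) *)
Definition Simon (a b c : 'I_4) : C :=
  2^-1 * (gam a b * Tc c - gam a c * Tc b)
  + 4 * (2^-1 * (Uac a c * sigma b - Uac a b * sigma c)).

Definition SimonU (a b c : 'I_4) : C :=
  sum4 (fun p => sum4 (fun q => sum4 (fun r =>
    ginv g a p * ginv g b q * ginv g c r * Simon p q r))).

Definition SimonSq : C :=
  sum4 (fun a => sum4 (fun b => sum4 (fun c => Simon a b c * (SimonU a b c)^*))).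

End Simon.

Definition antisym2 (C : numClosedFieldType) (F : 'I_4 -> 'I_4 -> C) :=
  forall a b, F a b = - F b a.

Definition weyl_like (C : numClosedFieldType) (g : 'M[C]_4)
    (W : 'I_4 -> 'I_4 -> 'I_4 -> 'I_4 -> C) : Prop :=
  (forall a b c d, W a b c d \is Num.real) /\
  (forall a b c d, W a b c d = - W b a c d) /\
  (forall a b c d, W a b c d = - W a b d c) /\
  (forall a b c d, W a b c d = W c d a b) /\
  (forall a b c d, W a b c d + W a c d b + W a d b c = 0) /\
  (forall b d, sum4 (fun a => sum4 (fun c => ginv g a c * W a b c d)) = 0).

(* Main.v *)
Require Import Defs.
From HB Require Import structures.
From mathcomp Require Import all_boot all_order all_algebra.
From mathcomp Require Import ring.
From Stdlib Require Import FunctionalExtensionality.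
Set Implicit Arguments. Unset Strict Implicit. Unset Printing Implicit Defensive.
Import Order.TTheory GRing.Theory Num.Theory.
Local Open Scope ring_scope.

Section Gen.
Variable C : numClosedFieldType.
Implicit Types f : 'I_4 -> C.

Definition o0 : 'I_4 := @Ordinal 4 0 erefl.
Definition o1 : 'I_4 := @Ordinal 4 1 erefl.
Definition o2 : 'I_4 := @Ordinal 4 2 erefl.
Definition o3 : 'I_4 := @Ordinal 4 3 erefl.

Lemma sum4E f : sum4 f = f o0 + f o1 + f o2 + f o3.
Proof.
rewrite /sum4 !big_ord_recl big_ord0 addr0 !addrA.
by congr (_ + _ + _ + _); congr f; apply: val_inj.
Qed.

Lemma eq_sum4 f1 f2 : (forall i, f1 i = f2 i) -> sum4 f1 = sum4 f2.
Proof. by move=> H; rewrite !sum4E !H. Qed.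

Lemma sum4_exch (h : 'I_4 -> 'I_4 -> C) :
  sum4 (fun i => sum4 (fun j => h i j)) = sum4 (fun j => sum4 (fun i => h i j)).
Proof. by rewrite !sum4E; ring. Qed.

Lemma sum4_mull (k : C) f : k * sum4 f = sum4 (fun i => k * f i).
Proof. by rewrite !sum4E; ring. Qed.
Lemma sum4_mulr (k : C) f : sum4 f * k = sum4 (fun i => f i * k).
Proof. by rewrite !sum4E; ring. Qed.
Lemma sum4N f : sum4 (fun i => - f i) = - sum4 f.
Proof. by rewrite !sum4E; ring. Qed.
Lemma sum4_conj f : (sum4 f)^* = sum4 (fun i => (f i)^*).
Proof. by rewrite !sum4E !rmorphD. Qed.
Lemma sum4_0 : sum4 (fun _ => 0 : C) = 0.
Proof. by rewrite sum4E !addr0. Qed.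

Lemma ord4_cases (i : 'I_4) : [\/ i = o0, i = o1, i = o2 | i = o3].
Proof.
case: i => [[|[|[|[|n]]]] Hi].
- by constructor 1; apply: val_inj.
- by constructor 2; apply: val_inj.
- by constructor 3; apply: val_inj.
- by constructor 4; apply: val_inj.
- by [].
Qed.

Lemma levi_swap (a b c d : 'I_4) : levi C b a c d = - levi C a b c d.
Proof.
rewrite /levi.
set Ma := (\matrix_(i < 4, j < 4) ((nth a [:: a; b; c; d] i == j)%:R : C)).
transitivity (\det (row_perm (perm.tperm o0 o1) Ma)).
  congr (\det _); apply/matrixP => i j.
  rewrite [RHS]mxE.
  case: (ord4_cases i) => ->.
  - by rewrite perm.tpermL !mxE.
  - by rewrite perm.tpermR !mxE.
  - by rewrite perm.tpermD // !mxE.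
  - by rewrite perm.tpermD // !mxE.
rewrite row_permE det_mulmx det_perm perm.odd_tperm /=.
by rewrite expr1 mulN1r.
Qed.

Lemma eta_swap (g : 'M[C]_4) a b c d : Defs.eta g b a c d = - Defs.eta g a b c d.
Proof. by rewrite /Defs.eta levi_swap mulrN. Qed.

End Gen.


Section Orth.
Variable C : numClosedFieldType.
Variables (g : 'M[C]_4) (zeta : 'I_4 -> C) (F : 'I_4 -> 'I_4 -> C)
          (W : 'I_4 -> 'I_4 -> 'I_4 -> 'I_4 -> C).
Hypothesis Hgs : forall a b, g a b = g b a.
Hypothesis Hgis : forall a b, ginv g a b = ginv g b a.
Hypothesis Hgg : ginv g *m g = 1%:M.
Hypothesis HF : forall a b, F a b = - F b a.
Hypothesis HW12 : forall a b c d, W a b c d = - W b a c d.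
Hypothesis HW34 : forall a b c d, W a b c d = - W a b d c.

Lemma antisym_quad (u : 'I_4 -> C) (X : 'I_4 -> 'I_4 -> C) :
  (forall a m, X a m = - X m a) ->
  sum4 (fun a => sum4 (fun m => u a * u m * X m a)) = 0.
Proof.
move=> HX.
set s := sum4 _.
have E : s = - s.
  rewrite {1}/s sum4_exch -sum4N; apply: eq_sum4 => a.
  rewrite -sum4N; apply: eq_sum4 => m.
  by rewrite HX; ring.
have : s *+ 2 = 0 by rewrite mulr2n {1}E addNr.
by move/eqP; rewrite mulrn_eq0 /= => /eqP.
Qed.

Lemma raise2N (T : 'I_4 -> 'I_4 -> C) c d :
  raise2 g (fun p q => - T p q) c d = - raise2 g T c d.
Proof.
rewrite /raise2 -sum4N; apply: eq_sum4 => p.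
rewrite -sum4N; apply: eq_sum4 => q; by rewrite mulrN.
Qed.

Lemma FF_anti a b : FF g F a b = - FF g F b a.
Proof.
rewrite /FF /Fstar HF opprD; congr (_ + _).
rewrite -mulrN -mulrN; congr (_ * (_ * _)).
rewrite -sum4N; apply: eq_sum4 => c.
rewrite -sum4N; apply: eq_sum4 => d.
by rewrite eta_swap mulNr.
Qed.

Lemma CC_anti12 a b c d : CC g W a b c d = - CC g W b a c d.
Proof.
rewrite /CC /Wstar HW12 opprD; congr (_ + _).
rewrite -mulrN -mulrN; congr (_ * (_ * _)).
rewrite -sum4N; apply: eq_sum4 => p.
rewrite -sum4N; apply: eq_sum4 => q.
rewrite -mulrN; congr (_ * _).
rewrite -raise2N; congr (raise2 g _ p q).
by apply: functional_extensionality => x; apply: functional_extensionality => y.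
Qed.

Lemma CC_anti34 a b c d : CC g W a b c d = - CC g W a b d c.
Proof.
rewrite /CC /Wstar HW34 opprD; congr (_ + _).
rewrite -mulrN -mulrN; congr (_ * (_ * _)).
rewrite -sum4N; apply: eq_sum4 => p.
rewrite -sum4N; apply: eq_sum4 => q.
by rewrite eta_swap mulNr.
Qed.

Local Notation u := (zetaU g zeta).

Lemma ug b : sum4 (fun a => u a * g a b) = zeta b.
Proof.
have E : forall c, ((ginv g *m g) c b) = sum4 (fun a => ginv g c a * g a b).
  by move=> c; rewrite mxE.
transitivity (sum4 (fun c => zeta c * (ginv g *m g) c b)).
  symmetry; under eq_sum4 => c do rewrite E sum4_mull.
  rewrite sum4_exch; apply: eq_sum4 => a.
  rewrite /zetaU sum4_mulr; apply: eq_sum4 => c.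
  by rewrite Hgis; ring.
rewrite Hgg; under eq_sum4 => c do rewrite mxE.
rewrite sum4E.
by case: (ord4_cases b) => ->; rewrite /= !mulr0 !mulr1 ?add0r ?addr0.
Qed.

Lemma lamE : sum4 (fun a => u a * zeta a) = lam g zeta.
Proof. by rewrite /lam; apply: eq_sum4 => a; rewrite mulrC. Qed.

Lemma gam_orth1 b : sum4 (fun a => u a * gam g zeta a b) = 0.
Proof.
transitivity (sum4 (fun a => u a * zeta a) * zeta b
   - lam g zeta * sum4 (fun a => u a * g a b)).
  by rewrite /gam !sum4E; ring.
by rewrite ug lamE mulrC subrr.
Qed.

Lemma gam_orth2 a : sum4 (fun b => u b * gam g zeta a b) = 0.
Proof.
transitivity (sum4 (fun b => u b * zeta b) * zeta a
   - lam g zeta * sum4 (fun b => u b * g b a)).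
  by rewrite /gam !sum4E !(Hgs a); ring.
by rewrite ug lamE mulrC subrr.
Qed.

Lemma Uac_orth1 c : sum4 (fun a => u a * Uac g zeta W a c) = 0.
Proof.
transitivity (sum4 (fun r => u r *
   sum4 (fun a => sum4 (fun m => u a * u m * CC g W m a r c)))).
  by rewrite /Uac !sum4E; ring.
rewrite -(sum4_0 C); apply: eq_sum4 => r.
by rewrite antisym_quad ?mulr0 // => a m; rewrite CC_anti12.
Qed.

Lemma Uac_orth2 a : sum4 (fun b => u b * Uac g zeta W a b) = 0.
Proof.
transitivity (sum4 (fun m => u m *
   sum4 (fun b => sum4 (fun r => u b * u r * CC g W m a r b)))).
  by rewrite /Uac !sum4E; ring.
rewrite -(sum4_0 C); apply: eq_sum4 => m.
by rewrite antisym_quad ?mulr0 // => x y; rewrite CC_anti34.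
Qed.

Lemma sum4_perm4 (f : 'I_4 -> 'I_4 -> 'I_4 -> 'I_4 -> C) :
  sum4 (fun b => sum4 (fun m => sum4 (fun r => sum4 (fun d => f b m r d)))) =
  sum4 (fun r => sum4 (fun d => sum4 (fun b => sum4 (fun m => f b m r d)))).
Proof.
transitivity (sum4 (fun b => sum4 (fun r => sum4 (fun d => sum4 (fun m => f b m r d))))).
  apply: eq_sum4 => b; rewrite sum4_exch; apply: eq_sum4 => r.
  by rewrite sum4_exch.
rewrite sum4_exch; apply: eq_sum4 => r; by rewrite sum4_exch.
Qed.

Lemma Tc_orth : sum4 (fun b => zetaU g zeta b * Tc g zeta F W b) = 0.
Proof.
transitivity (sum4 (fun b => sum4 (fun m => sum4 (fun r => sum4 (fun d =>
   raise2 g (FF g F) r d * (zetaU g zeta b * zetaU g zeta m * CC g W b m r d)))))).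
  apply: eq_sum4 => b; rewrite /Tc sum4_mull; apply: eq_sum4 => m.
  rewrite sum4_mull; apply: eq_sum4 => r.
  rewrite sum4_mull; apply: eq_sum4 => d; ring.
rewrite sum4_perm4 -(sum4_0 C); apply: eq_sum4 => r.
rewrite -(sum4_0 C); apply: eq_sum4 => d.
under eq_sum4 => b do rewrite -sum4_mull.
rewrite -sum4_mull.
rewrite (@antisym_quad (zetaU g zeta) (fun m b => CC g W b m r d)) ?mulr0 //.
by move=> x y; rewrite CC_anti12.
Qed.

Lemma sigma_orth : sum4 (fun b => u b * sigma g zeta F b) = 0.
Proof.
transitivity (2 * sum4 (fun b => sum4 (fun d => u b * u d * FF g F b d))).
  by rewrite /sigma !sum4E; ring.
rewrite (@antisym_quad (zetaU g zeta) (fun d b => FF g F b d)) ?mulr0 //.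
by move=> x y; rewrite FF_anti.
Qed.

Local Notation S := (Simon g zeta F W).

Lemma Simon_orth1 b c : sum4 (fun a => u a * S a b c) = 0.
Proof.
transitivity (2^-1 * (sum4 (fun a => u a * gam g zeta a b) * Tc g zeta F W c
   - sum4 (fun a => u a * gam g zeta a c) * Tc g zeta F W b)
  + 4 * (2^-1 * (sum4 (fun a => u a * Uac g zeta W a c) * sigma g zeta F b
   - sum4 (fun a => u a * Uac g zeta W a b) * sigma g zeta F c))).
  by rewrite /Simon !sum4E; ring.
by rewrite !gam_orth1 !Uac_orth1; ring.
Qed.

Lemma Simon_orth2 a c : sum4 (fun b => u b * S a b c) = 0.
Proof.
transitivity (2^-1 * (sum4 (fun b => u b * gam g zeta a b) * Tc g zeta F W c
   - gam g zeta a c * sum4 (fun b => u b * Tc g zeta F W b))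
  + 4 * (2^-1 * (Uac g zeta W a c * sum4 (fun b => u b * sigma g zeta F b)
   - sum4 (fun b => u b * Uac g zeta W a b) * sigma g zeta F c))).
  by rewrite /Simon !sum4E; ring.
by rewrite gam_orth2 Uac_orth2 Tc_orth sigma_orth; ring.
Qed.

Lemma Simon_anti a b c : S a b c = - S a c b.
Proof. by rewrite /Simon; ring. Qed.

Lemma Simon_orth3 a b : sum4 (fun c => u c * S a b c) = 0.
Proof.
rewrite -[RHS]oppr0 -(Simon_orth2 a b) -sum4N; apply: eq_sum4 => c.
by rewrite Simon_anti mulrN.
Qed.

End Orth.


Section Contr.
Variable C : numClosedFieldType.
Local Notation Tn := ('I_4 -> 'I_4 -> 'I_4 -> C).
Implicit Types (M N : 'M[C]_4) (S X Y : Tn).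

Definition c1 M S : Tn := fun i b c => sum4 (fun a => M a i * S a b c).
Definition c2 M S : Tn := fun a j c => sum4 (fun b => M b j * S a b c).
Definition c3 M S : Tn := fun a b k => sum4 (fun c => M c k * S a b c).
Definition pr X Y : C :=
  sum4 (fun a => sum4 (fun b => sum4 (fun c => X a b c * (Y a b c)^*))).

Lemma funext3 X Y : (forall a b c, X a b c = Y a b c) -> X = Y.
Proof.
move=> H; apply: functional_extensionality => a.
apply: functional_extensionality => b; apply: functional_extensionality => c.
exact: H.
Qed.

Lemma mulmxE4 M N a b : (M *m N) a b = sum4 (fun p => M a p * N p b).
Proof. by rewrite mxE. Qed.

Lemma c1_comp M N S : c1 (N *m M) S = c1 M (c1 N S).
Proof. apply: funext3 => i b c; rewrite /c1; under eq_sum4 => a do rewrite mulmxE4.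
by rewrite !sum4E; ring. Qed.
Lemma c2_comp M N S : c2 (N *m M) S = c2 M (c2 N S).
Proof. apply: funext3 => i b c; rewrite /c2; under eq_sum4 => a do rewrite mulmxE4.
by rewrite !sum4E; ring. Qed.
Lemma c3_comp M N S : c3 (N *m M) S = c3 M (c3 N S).
Proof. apply: funext3 => i b c; rewrite /c3; under eq_sum4 => a do rewrite mulmxE4.
by rewrite !sum4E; ring. Qed.

Lemma c1c2 M N S : c1 M (c2 N S) = c2 N (c1 M S).
Proof. apply: funext3 => i b c; rewrite /c1 /c2 !sum4E; ring. Qed.
Lemma c1c3 M N S : c1 M (c3 N S) = c3 N (c1 M S).
Proof. apply: funext3 => i b c; rewrite /c1 /c3 !sum4E; ring. Qed.
Lemma c2c3 M N S : c2 M (c3 N S) = c3 N (c2 M S).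
Proof. apply: funext3 => i b c; rewrite /c2 /c3 !sum4E; ring. Qed.
Lemma c2c1 M N S : c2 M (c1 N S) = c1 N (c2 M S).
Proof. by rewrite c1c2. Qed.
Lemma c3c1 M N S : c3 M (c1 N S) = c1 N (c3 M S).
Proof. by rewrite c1c3. Qed.
Lemma c3c2 M N S : c3 M (c2 N S) = c2 N (c3 M S).
Proof. by rewrite c2c3. Qed.

Lemma delta_sum (f : 'I_4 -> C) i : sum4 (fun a => (a == i)%:R * f a) = f i.
Proof.
rewrite sum4E.
by case: (ord4_cases i) => ->; rewrite /= !mul0r !mul1r ?add0r ?addr0.
Qed.

Lemma c1_1 S : c1 1%:M S = S.
Proof. apply: funext3 => i b c; rewrite /c1; under eq_sum4 => a do rewrite mxE.
exact: delta_sum. Qed.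
Lemma c2_1 S : c2 1%:M S = S.
Proof. apply: funext3 => i b c; rewrite /c2; under eq_sum4 => a do rewrite mxE.
exact: (delta_sum (fun a => S i a c)). Qed.
Lemma c3_1 S : c3 1%:M S = S.
Proof. apply: funext3 => i b c; rewrite /c3; under eq_sum4 => a do rewrite mxE.
exact: (delta_sum (fun a => S i b a)). Qed.

Definition realm M := forall a b, (M a b)^* = M a b.

Lemma sum4_perm3 (f : 'I_4 -> 'I_4 -> 'I_4 -> C) :
  sum4 (fun a => sum4 (fun b => sum4 (fun p => f a b p))) =
  sum4 (fun p => sum4 (fun b => sum4 (fun a => f a b p))).
Proof.
transitivity (sum4 (fun a => sum4 (fun p => sum4 (fun b => f a b p)))).
  by apply: eq_sum4 => a; rewrite sum4_exch.
rewrite sum4_exch; apply: eq_sum4 => p; by rewrite sum4_exch.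
Qed.

Lemma pr_c1 M X Y : realm M -> pr X (c1 M Y) = pr (c1 M^T X) Y.
Proof.
move=> HM; rewrite /pr /c1.
transitivity (sum4 (fun a => sum4 (fun b => sum4 (fun c => sum4 (fun p =>
   M p a * X a b c * (Y p b c)^*))))).
  apply: eq_sum4 => a; apply: eq_sum4 => b; apply: eq_sum4 => c.
  rewrite sum4_conj sum4_mull; apply: eq_sum4 => p.
  by rewrite rmorphM /= HM; ring.
transitivity (sum4 (fun p => sum4 (fun b => sum4 (fun c => sum4 (fun a =>
   M p a * X a b c * (Y p b c)^*))))).
  transitivity (sum4 (fun a => sum4 (fun b => sum4 (fun p => sum4 (fun c =>
   M p a * X a b c * (Y p b c)^*))))).
    by apply: eq_sum4 => a; apply: eq_sum4 => b; rewrite sum4_exch.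
  rewrite (sum4_perm3 (fun a b p => sum4 (fun c => M p a * X a b c * (Y p b c)^*))).
  by apply: eq_sum4 => p; apply: eq_sum4 => b; rewrite sum4_exch.
apply: eq_sum4 => p; apply: eq_sum4 => b; apply: eq_sum4 => c.
rewrite sum4_mulr; apply: eq_sum4 => a; by rewrite mxE.
Qed.

Lemma pr_c2 M X Y : realm M -> pr X (c2 M Y) = pr (c2 M^T X) Y.
Proof.
move=> HM; rewrite /pr /c2; apply: eq_sum4 => a.
transitivity (sum4 (fun b => sum4 (fun c => sum4 (fun q =>
   M q b * X a b c * (Y a q c)^*)))).
  apply: eq_sum4 => b; apply: eq_sum4 => c.
  rewrite sum4_conj sum4_mull; apply: eq_sum4 => q.
  by rewrite rmorphM /= HM; ring.
rewrite sum4_perm3; apply: eq_sum4 => q.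
apply: eq_sum4 => c.
rewrite sum4_mulr; apply: eq_sum4 => b; by rewrite mxE.
Qed.

Lemma pr_c3 M X Y : realm M -> pr X (c3 M Y) = pr (c3 M^T X) Y.
Proof.
move=> HM; rewrite /pr /c3; apply: eq_sum4 => a; apply: eq_sum4 => b.
transitivity (sum4 (fun c => sum4 (fun r => M r c * X a b c * (Y a b r)^*))).
  apply: eq_sum4 => c.
  rewrite sum4_conj sum4_mull; apply: eq_sum4 => r.
  by rewrite rmorphM /= HM; ring.
rewrite sum4_exch; apply: eq_sum4 => r.
rewrite sum4_mulr; apply: eq_sum4 => c; by rewrite mxE.
Qed.

Definition orth1 (u : 'I_4 -> C) S := forall b c, sum4 (fun a => u a * S a b c) = 0.
Definition orth2 (u : 'I_4 -> C) S := forall a c, sum4 (fun b => u b * S a b c) = 0.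
Definition orth3 (u : 'I_4 -> C) S := forall a b, sum4 (fun c => u c * S a b c) = 0.

Definition lift_mx M (v : 'I_4 -> C) a := sum4 (fun i => M a i * v i).

Lemma o1_c1 M v S : orth1 (lift_mx M v) S -> orth1 v (c1 M S).
Proof. move=> H b c; rewrite -(H b c) /lift_mx /c1 !sum4E; ring. Qed.
Lemma o2_c2 M v S : orth2 (lift_mx M v) S -> orth2 v (c2 M S).
Proof. move=> H b c; rewrite -(H b c) /lift_mx /c2 !sum4E; ring. Qed.
Lemma o3_c3 M v S : orth3 (lift_mx M v) S -> orth3 v (c3 M S).
Proof. move=> H b c; rewrite -(H b c) /lift_mx /c3 !sum4E; ring. Qed.

Lemma o1_c2 M u S : orth1 u S -> orth1 u (c2 M S).
Proof.
move=> H b c; transitivity (sum4 (fun q => M q b * sum4 (fun a => u a * S a q c))).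
  by rewrite /c2 !sum4E; ring.
by rewrite -(sum4_0 C); apply: eq_sum4 => q; rewrite H mulr0.
Qed.
Lemma o1_c3 M u S : orth1 u S -> orth1 u (c3 M S).
Proof.
move=> H b c; transitivity (sum4 (fun q => M q c * sum4 (fun a => u a * S a b q))).
  by rewrite /c3 !sum4E; ring.
by rewrite -(sum4_0 C); apply: eq_sum4 => q; rewrite H mulr0.
Qed.
Lemma o2_c1 M u S : orth2 u S -> orth2 u (c1 M S).
Proof.
move=> H a c; transitivity (sum4 (fun q => M q a * sum4 (fun b => u b * S q b c))).
  by rewrite /c1 !sum4E; ring.
by rewrite -(sum4_0 C); apply: eq_sum4 => q; rewrite H mulr0.
Qed.
Lemma o2_c3 M u S : orth2 u S -> orth2 u (c3 M S).
Proof.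
move=> H a c; transitivity (sum4 (fun q => M q c * sum4 (fun b => u b * S a b q))).
  by rewrite /c3 !sum4E; ring.
by rewrite -(sum4_0 C); apply: eq_sum4 => q; rewrite H mulr0.
Qed.
Lemma o3_c1 M u S : orth3 u S -> orth3 u (c1 M S).
Proof.
move=> H a b; transitivity (sum4 (fun q => M q a * sum4 (fun c => u c * S q b c))).
  by rewrite /c1 !sum4E; ring.
by rewrite -(sum4_0 C); apply: eq_sum4 => q; rewrite H mulr0.
Qed.
Lemma o3_c2 M u S : orth3 u S -> orth3 u (c2 M S).
Proof.
move=> H a b; transitivity (sum4 (fun q => M q b * sum4 (fun c => u c * S a q c))).
  by rewrite /c2 !sum4E; ring.
by rewrite -(sum4_0 C); apply: eq_sum4 => q; rewrite H mulr0.
Qed.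

End Contr.


Section Pos.
Variable C : numClosedFieldType.
Local Notation Tn := ('I_4 -> 'I_4 -> 'I_4 -> C).

Definition Dd (i : 'I_4) : C := if i == ord0 then -1 else 1.
Lemma Dd0 : Dd o0 = -1. Proof. by []. Qed.
Lemma Dd1 : Dd o1 = 1. Proof. by []. Qed.
Lemma Dd2 : Dd o2 = 1. Proof. by []. Qed.
Lemma Dd3 : Dd o3 = 1. Proof. by []. Qed.

Definition sum6 (f : nat -> C) := f 0%N + f 1%N + f 2%N + f 3%N + f 4%N + f 5%N.

Lemma eq_sum6 f1 f2 : (forall m, f1 m = f2 m) -> sum6 f1 = sum6 f2.
Proof. by move=> H; rewrite /sum6 !H. Qed.

Lemma sum6_ge0 f : (forall m, 0 <= f m) -> 0 <= sum6 f.
Proof. by move=> H; rewrite /sum6 !addr_ge0. Qed.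

Lemma sum6_eq0 f : (forall m, 0 <= f m) -> sum6 f = 0 ->
  [/\ f 0%N = 0, f 1%N = 0 & f 2%N = 0].
Proof.
move=> H /eqP; rewrite /sum6.
rewrite !paddr_eq0 ?addr_ge0 // => /andP[/andP[/andP[/andP[/andP[] ]]]].
by do 3 move/eqP=> ->.
Qed.

Lemma sum46 (a : 'I_4 -> C) (f : nat -> 'I_4 -> C) :
  sum4 (fun k => a k * sum6 (fun m => f m k)) = sum6 (fun m => sum4 (fun k => a k * f m k)).
Proof. by rewrite /sum6 !sum4E; ring. Qed.

Variable z : 'I_4 -> C.
Hypothesis Hz : forall i, (z i)^* = z i.
Definition lamz := sum4 (fun i => Dd i * (z i * z i)).
Hypothesis Hlam : lamz < 0.
Definition v (i : 'I_4) := Dd i * z i.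
Definition om (x : 'I_4 -> C) := sum4 (fun i => v i * x i).

Lemma z0_neq0 : z o0 != 0.
Proof.
apply/negP => /eqP H0.
have : 0 <= lamz.
  rewrite /lamz sum4E H0 mulr0 mulr0 add0r Dd1 Dd2 Dd3 !mul1r.
  have zz : forall i, 0 <= z i * z i by move=> i; rewrite -{2}(Hz i) mul_conjC_ge0.
  by rewrite !addr_ge0.
by move=> h; move: (le_lt_trans h Hlam); rewrite ltxx.
Qed.

Lemma zz0_gt0 : 0 < z o0 * z o0.
Proof. by rewrite -{2}(Hz o0) mul_conjC_gt0 z0_neq0. Qed.

Definition mu (m : nat) : C := if (m < 3)%N then - lamz / (z o0 * z o0) else 1 / (z o0 * z o0).

Lemma mu_gt0 m : 0 < mu m.
Proof.
rewrite /mu; case: ifP => _; apply: divr_gt0; rewrite ?zz0_gt0 //.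
by rewrite oppr_gt0.
Qed.

Definition ell (m : nat) (x : 'I_4 -> C) : C :=
  match m with
  | O => x o1
  | S O => x o2
  | S (S O) => x o3
  | S (S (S O)) => z o1 * x o2 - z o2 * x o1
  | S (S (S (S O))) => z o1 * x o3 - z o3 * x o1
  | S (S (S (S (S O)))) => z o2 * x o3 - z o3 * x o2
  | _ => 0
  end.

Definition q1 (x : 'I_4 -> C) := sum4 (fun i => Dd i * (x i * (x i)^*)).

Lemma level1 x : om x = 0 -> q1 x = sum6 (fun m => mu m * (ell m x * (ell m x)^*)).
Proof.
move=> H.
have z0n := z0_neq0.
have Ex : x o0 = (z o1 * x o1 + z o2 * x o2 + z o3 * x o3) / z o0.
  apply: (canRL (mulfK z0n)).
  move: H; rewrite /om /v sum4E Dd0 Dd1 Dd2 Dd3 => H.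
  by apply/eqP; rewrite -subr_eq0 -oppr_eq0; apply/eqP; rewrite -[RHS]H; ring.
have Exc : (x o0)^* = (z o1 * (x o1)^* + z o2 * (x o2)^* + z o3 * (x o3)^*) / z o0.
  by rewrite Ex rmorphM /= fmorphV /= !rmorphD /= !rmorphM /= !Hz.
rewrite /q1 /sum6 /mu /ell /= sum4E Dd0 Dd1 Dd2 Dd3 Exc Ex.
rewrite /lamz sum4E Dd0 Dd1 Dd2 Dd3.
rewrite !(rmorphB, rmorphM) /= !Hz.
by field.
Qed.

Lemma ell_orth m (Y : 'I_4 -> 'I_4 -> C) :
  (forall i, om (fun j => Y i j) = 0) -> om (fun j => ell m (fun i => Y i j)) = 0.
Proof.
move=> H; case: m => [|[|[|[|[|[|m]]]]]] /=; rewrite ?H //.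
- transitivity (z o1 * om (Y o2) - z o2 * om (Y o1)).
    by rewrite /om !sum4E; ring.
  by rewrite !H; ring.
- transitivity (z o1 * om (Y o3) - z o3 * om (Y o1)).
    by rewrite /om !sum4E; ring.
  by rewrite !H; ring.
- transitivity (z o2 * om (Y o3) - z o3 * om (Y o2)).
    by rewrite /om !sum4E; ring.
  by rewrite !H; ring.
- by rewrite /om sum4E; ring.
Qed.

Definition Q2 (U : 'I_4 -> 'I_4 -> C) := sum4 (fun k => Dd k * q1 (fun j => U j k)).
Definition Q3 (T : Tn) := sum4 (fun k => Dd k * sum4 (fun j => Dd j * q1 (fun i => T i j k))).

Lemma level2 U : (forall k, om (fun j => U j k) = 0) ->
  Q2 U = sum6 (fun m => mu m * q1 (fun k => ell m (fun j => U j k))).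
Proof.
move=> H.
rewrite /Q2; under eq_sum4 => k do rewrite level1 //.
rewrite sum46; apply: eq_sum6 => m; rewrite /q1 !sum4E; ring.
Qed.

Lemma level3 T : (forall j k, om (fun i => T i j k) = 0) ->
  Q3 T = sum6 (fun m => mu m * Q2 (fun j k => ell m (fun i => T i j k))).
Proof.
move=> H.
rewrite /Q3; under eq_sum4 => k do (under eq_sum4 => j do rewrite level1 //; rewrite sum46).
rewrite sum46; apply: eq_sum6 => m; rewrite /Q2 /q1 !sum4E; ring.
Qed.

Definition N3 (T : Tn) m1 m2 m3 :=
  ell m3 (fun k => ell m2 (fun j => ell m1 (fun i => T i j k))).

Lemma Q3E T : orth1 v T -> orth2 v T -> orth3 v T ->
  Q3 T = sum6 (fun m1 => mu m1 * sum6 (fun m2 => mu m2 * sum6 (fun m3 => mu m3 *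
     (N3 T m1 m2 m3 * (N3 T m1 m2 m3)^*)))).
Proof.
move=> H1 H2 H3.
rewrite level3; last by move=> j k; exact: H1.
apply: eq_sum6 => m1; congr (_ * _).
rewrite level2; last first.
  move=> k; apply: ell_orth => i; exact: (H2 i k).
apply: eq_sum6 => m2; congr (_ * _).
rewrite level1; last first.
  apply: ell_orth => j; apply: ell_orth => i; exact: (H3 i j).
by [].
Qed.

Lemma N_ge0 (x : C) : 0 <= x * x^*.
Proof. exact: mul_conjC_ge0. Qed.

Lemma Q3_ge0 T : orth1 v T -> orth2 v T -> orth3 v T -> 0 <= Q3 T.
Proof.
move=> H1 H2 H3; rewrite Q3E //.
apply: sum6_ge0 => m1; apply: mulr_ge0; first exact: ltW (mu_gt0 _).
apply: sum6_ge0 => m2; apply: mulr_ge0; first exact: ltW (mu_gt0 _).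
apply: sum6_ge0 => m3; apply: mulr_ge0; first exact: ltW (mu_gt0 _).
exact: N_ge0.
Qed.

Lemma lev_zero (f : nat -> C) : 
  sum6 (fun m => mu m * f m) = 0 -> (forall m, 0 <= f m) -> forall m, (m < 3)%N -> f m = 0.
Proof.
move=> H H0.
have [] := sum6_eq0 _ H.
  by move=> m; apply: mulr_ge0; [exact: ltW (mu_gt0 _)|exact: H0].
have mun : forall m, mu m != 0 by move=> m; rewrite gt_eqF // mu_gt0.
move=> h0 h1 h2 [|[|[|m]]] // _; [move: h0|move: h1|move: h2] => /= /eqP;
  by rewrite mulf_eq0 (negbTE (mun _)) /= => /eqP.
Qed.

Lemma om_spatial (x : 'I_4 -> C) : om x = 0 -> x o1 = 0 -> x o2 = 0 -> x o3 = 0 ->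
  x o0 = 0.
Proof.
rewrite /om /v sum4E Dd0 => H h1 h2 h3.
move: H; rewrite h1 h2 h3 !mulr0 !addr0 => /eqP.
rewrite !mulf_eq0 oppr_eq0 oner_eq0 (negbTE z0_neq0) /=.
by move/eqP.
Qed.

Lemma ell_pick (a : 'I_4) : a != o0 ->
  exists2 m, (m < 3)%N & forall x : 'I_4 -> C, ell m x = x a.
Proof.
case: (ord4_cases a) => -> // _.
- by exists 0%N.
- by exists 1%N.
- by exists 2%N.
Qed.

Lemma Q3_eq0 T : orth1 v T -> orth2 v T -> orth3 v T -> Q3 T = 0 ->
  forall i j k, T i j k = 0.
Proof.
move=> H1 H2 H3; rewrite Q3E // => HQ.
have g0 : forall x : C, 0 <= x * x^* by move=> x; exact: N_ge0.
have s0 : forall f : nat -> C, (forall m, 0 <= f m) -> forall m, 0 <= mu m * f m.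
  by move=> f hf m; apply: mulr_ge0; [exact: ltW (mu_gt0 _)|exact: hf].
have HN : forall m1 m2 m3, (m1 < 3)%N -> (m2 < 3)%N -> (m3 < 3)%N ->
    N3 T m1 m2 m3 = 0.
  move=> m1 m2 m3 h1 h2 h3.
  have P2 : forall m1 m2, 0 <= sum6 (fun m3 => mu m3 * (N3 T m1 m2 m3 * (N3 T m1 m2 m3)^*)).
    by move=> a b; apply: sum6_ge0; apply: s0 => c; exact: g0.
  have P1 : forall m1, 0 <= sum6 (fun m2 => mu m2 *
        sum6 (fun m3 => mu m3 * (N3 T m1 m2 m3 * (N3 T m1 m2 m3)^*))).
    by move=> a; apply: sum6_ge0; apply: s0 => b; exact: P2.
  have E1 := lev_zero HQ P1 h1.
  have E2 := lev_zero E1 (P2 m1) h2.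
  have E3 := lev_zero E2 (fun m => g0 _) h3.
  by apply/eqP; rewrite -mul_conjC_eq0; apply/eqP.
have Hsp : forall i j k, i != o0 -> j != o0 -> k != o0 -> T i j k = 0.
  move=> i j k hi hj hk.
  have [m1 h1 e1] := ell_pick hi.
  have [m2 h2 e2] := ell_pick hj.
  have [m3 h3 e3] := ell_pick hk.
  by have := HN _ _ _ h1 h2 h3; rewrite /N3 e3 e2 e1.
have S1 : forall i j k, j != o0 -> k != o0 -> T i j k = 0.
  move=> i j k hj hk; case: (ord4_cases i) => ->; try by apply: Hsp.
  by apply: (om_spatial (x := fun i => T i j k)); [exact: H1|apply: Hsp..].
have S2 : forall i j k, k != o0 -> T i j k = 0.
  move=> i j k hk; case: (ord4_cases j) => ->; try by apply: S1.
  by apply: (om_spatial (x := fun j => T i j k)); [exact: H2|apply: S1..].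
move=> i j k; case: (ord4_cases k) => ->; try by apply: S2.
by apply: (om_spatial (x := fun k => T i j k)); [exact: H3|apply: S2..].
Qed.

End Pos.


Section Main.
Variable C : numClosedFieldType.
Local Notation Tn := ('I_4 -> 'I_4 -> 'I_4 -> C).
Local Notation Dm := (minkowski_diag C).

Lemma Dm_entry a b : Dm a b = (a == b)%:R * Dd C a.
Proof. by rewrite /minkowski_diag /Dd !mxE; case: (a == b); rewrite /= ?mulr1n ?mulr0n ?mul1r ?mul0r. Qed.

Lemma Dm2 : Dm *m Dm = 1%:M.
Proof.
rewrite /minkowski_diag mulmx_diag; apply/matrixP => a b; rewrite !mxE.
by case: ifP => _; rewrite ?mulrNN mulr1.
Qed.

Lemma DmT : Dm^T = Dm.
Proof. by rewrite /minkowski_diag tr_diag_mx. Qed.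

Lemma realm_P (P : 'M[C]_4) : real_mx P -> realm P.
Proof. by move=> H a b; rewrite conj_Creal. Qed.
Lemma realm_tr (P : 'M[C]_4) : realm P -> realm P^T.
Proof. by move=> H a b; rewrite mxE H. Qed.
Lemma realm_Dm : realm Dm.
Proof. by move=> a b; rewrite Dm_entry rmorphM /= rmorph_nat /Dd; case: ifP; rewrite ?rmorphN rmorph1. Qed.

Lemma cDm1 (X : Tn) : c1 Dm X = fun i b c => Dd C i * X i b c.
Proof.
apply: funext3 => i b c; rewrite /c1; under eq_sum4 => a do rewrite Dm_entry -mulrA.
by rewrite delta_sum.
Qed.
Lemma cDm2 (X : Tn) : c2 Dm X = fun a j c => Dd C j * X a j c.
Proof.
apply: funext3 => i b c; rewrite /c2; under eq_sum4 => a do rewrite Dm_entry -mulrA.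
by rewrite (delta_sum (fun a => Dd C a * X i a c)).
Qed.
Lemma cDm3 (X : Tn) : c3 Dm X = fun a b k => Dd C k * X a b k.
Proof.
apply: funext3 => i b c; rewrite /c3; under eq_sum4 => a do rewrite Dm_entry -mulrA.
by rewrite (delta_sum (fun a => Dd C a * X i b a)).
Qed.

Lemma chain (P : 'M[C]_4) (S : Tn) : realm P ->
  let G := P *m (Dm *m P^T) in
  let T := c1 P (c2 P (c3 P S)) in
  pr S (c1 G (c2 G (c3 G S))) = pr T (c1 Dm (c2 Dm (c3 Dm T))).
Proof.
move=> HP G T.
have cG1 : forall Y, c1 G Y = c1 P^T (c1 Dm (c1 P Y)) by move=> Y; rewrite /G !c1_comp.
have cG2 : forall Y, c2 G Y = c2 P^T (c2 Dm (c2 P Y)) by move=> Y; rewrite /G !c2_comp.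
have cG3 : forall Y, c3 G Y = c3 P^T (c3 Dm (c3 P Y)) by move=> Y; rewrite /G !c3_comp.
have HPt := realm_tr HP.
rewrite cG1 pr_c1 // trmxK !c1c2 !c1c3.
rewrite cG2 pr_c2 // trmxK !c2c3 !c2c1.
rewrite cG3 pr_c3 // trmxK !c3c1 !c3c2.
by [].
Qed.

Lemma Dd_conj i : (Dd C i)^* = Dd C i.
Proof. by rewrite /Dd; case: ifP; rewrite ?rmorphN rmorph1. Qed.

Lemma prQ3 (T : Tn) : pr T (c1 Dm (c2 Dm (c3 Dm T))) = Q3 T.
Proof.
rewrite cDm3 cDm2 cDm1 /pr /Q3 /q1 sum4_perm3.
apply: eq_sum4 => k; rewrite sum4_mull; apply: eq_sum4 => j.
rewrite mulrA sum4_mull; apply: eq_sum4 => i.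
by rewrite !rmorphM /= !Dd_conj; ring.
Qed.

End Main.

Theorem mainTheorem12 (C : numClosedFieldType) (g : 'M[C]_4)
  (zeta : 'I_4 -> C) (F : 'I_4 -> 'I_4 -> C)
  (W : 'I_4 -> 'I_4 -> 'I_4 -> 'I_4 -> C) :
  lorentzian g ->
  real_vec zeta ->
  (forall a b, F a b \is Num.real) ->
  antisym2 F ->
  weyl_like g W ->
  lam g zeta < 0 ->
  0 <= SimonSq g zeta F W /\
  (SimonSq g zeta F W = 0 <-> forall a b c, Simon g zeta F W a b c = 0).
Proof.
move=> [_ [HgT [P [HPr [HPu HPg]]]]] Hzeta _ HF [_ [HW12 [HW34 _]]] Hlam.
set Dm := minkowski_diag C.
have HP := realm_P HPr.
have gB : g *m (P *m (Dm *m P^T)) = 1%:M.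
  have : P^T *m (g *m P *m Dm) = 1%:M.
    by rewrite !mulmxA HPg Dm2.
  by move/mulmx1C; rewrite !mulmxA.
have gU : g \in unitmx := (mulmx1_unit gB).1.
have ginvE : ginv g = P *m (Dm *m P^T).
  by rewrite /ginv -[invmx g]mulmx1 -gB mulKmx.
have ginvT : (ginv g)^T = ginv g.
  by rewrite ginvE !trmx_mul trmxK DmT mulmxA.
have Hgis : forall a b, ginv g a b = ginv g b a.
  by move=> a b; rewrite -[in LHS]ginvT mxE.
have Hgs : forall a b, g a b = g b a.
  by move=> a b; rewrite -[in LHS]HgT mxE.
have Hgg : ginv g *m g = 1%:M by rewrite /ginv (mulVmx gU).
have ginv_entry : forall a b, ginv g a b = sum4 (fun i => P a i * Dd C i * P b i).
  move=> a b; rewrite ginvE mulmxE4; apply: eq_sum4 => i; rewrite mulmxE4.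
  under eq_sum4 => j do rewrite Dm_entry mxE eq_sym -mulrA.
  by rewrite (delta_sum (fun j => Dd C i * P b j)) mulrA.
set zz := fun i => sum4 (fun b => P b i * zeta b).
have ulift : zetaU g zeta = lift_mx P (v zz).
  apply: functional_extensionality => a.
  rewrite /zetaU /lift_mx /v /zz; under eq_sum4 => b do rewrite ginv_entry.
  by rewrite !sum4E; ring.
have lamE : lam g zeta = lamz zz.
  rewrite /lam ulift /lift_mx /lamz /v.
  transitivity (sum4 (fun i => Dd C i * zz i * sum4 (fun a => P a i * zeta a))).
    by rewrite !sum4E; ring.
  by apply: eq_sum4 => i; rewrite /zz; ring.
have zzr : forall i, (zz i)^* = zz i.
  move=> i; rewrite /zz sum4_conj; apply: eq_sum4 => b.
  by rewrite rmorphM /= HP conj_Creal.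
have Hlz : lamz zz < 0 by rewrite -lamE.
set S := Simon g zeta F W.
have o1S : orth1 (zetaU g zeta) S by move=> b c; exact: Simon_orth1.
have o2S : orth2 (zetaU g zeta) S by move=> a c; exact: Simon_orth2.
have o3S : orth3 (zetaU g zeta) S by move=> a b; exact: Simon_orth3.
rewrite ulift in o1S o2S o3S.
set T := c1 P (c2 P (c3 P S)).
have o1T : orth1 (v zz) T by apply: o1_c1; apply: o1_c2; apply: o1_c3.
have o2T : orth2 (v zz) T by apply: o2_c1; apply: o2_c2; apply: o2_c3.
have o3T : orth3 (v zz) T by apply: o3_c1; apply: o3_c2; apply: o3_c3.
have SUE : SimonU g zeta F W = c1 (ginv g) (c2 (ginv g) (c3 (ginv g) S)).
  apply: funext3 => a b c; rewrite /SimonU /c1 /c2 /c3.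
  apply: eq_sum4 => p; rewrite [RHS]sum4_mull; apply: eq_sum4 => q.
  rewrite [RHS]mulrA [RHS]sum4_mull; apply: eq_sum4 => r.
  by rewrite /S (Hgis a p) (Hgis b q) (Hgis c r); ring.
have SQ : SimonSq g zeta F W = Q3 T.
  rewrite -prQ3.
  transitivity (pr S (SimonU g zeta F W)); first by [].
  by rewrite SUE ginvE chain.
rewrite SQ; split; first exact: Q3_ge0.
split.
  move=> HQ.
  have T0 := Q3_eq0 zzr Hlz o1T o2T o3T HQ.
  have -> : S = c3 (invmx P) (c2 (invmx P) (c1 (invmx P) T)).
    rewrite /T -c1_comp mulmxV // c1_1 -c2_comp mulmxV // c2_1.
    by rewrite -c3_comp mulmxV // c3_1.
  move=> a b c; rewrite /c3 /c2 /c1.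
  rewrite -(sum4_0 C); apply: eq_sum4 => r; rewrite -[RHS](mulr0 (invmx P r c)); congr (_ * _).
  rewrite -(sum4_0 C); apply: eq_sum4 => q; rewrite -[RHS](mulr0 (invmx P q b)); congr (_ * _).
  rewrite -(sum4_0 C); apply: eq_sum4 => p; by rewrite T0 mulr0.
move=> H0; rewrite -SQ /SimonSq.
rewrite -(sum4_0 C); apply: eq_sum4 => a.
rewrite -(sum4_0 C); apply: eq_sum4 => b.
rewrite -(sum4_0 C); apply: eq_sum4 => c.
by rewrite -/S H0 mul0r.
Qed.
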